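(* Let $k\ge2$ and let $\mathcal{M}_1,\dots,\mathcal{M}_k$ be matroids on a finite ground set $E$; let $T$ be independent in all of them, let $p\in(0,1)$, let $\Psi(e)$, $e\in T$, be i.i.d. with $\Pr[\Psi(e)=1]=1-p$, and let $S=\{e\in T:\Psi(e)=1\}$. Let $i\in[k]$, let $\tilde E\subseteq\mathrm{span}_i(T)$, and let $\tilde I\subseteq\tilde E$ be independent in $\mathcal{M}_i$ and in $\mathcal{M}_j/T$ for every $j\ne i$. Then for any fixed arrival order of the elements of $\tilde E$, $$\mathbb{E}_\Psi\left[\left|\mathrm{Greedy}(\mathcal{M}_1/T,\dots,\mathcal{M}_{i-1}/T,\mathcal{M}_i/S,\mathcal{M}_{i+1}/T,\dots,\mathcal{M}_k/T,\ \tilde E)\right|\right]\ge\frac{p}{1+p(k-1)}|\tilde I|.$$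
   Context: $\mathrm{span}_i(T)=\{e\in E:\mathrm{rank}_{\mathcal{M}_i}(T\cup\{e\})=\mathrm{rank}_{\mathcal{M}_i}(T)\}$. For a matroid $\mathcal{M}$ and independent set $X$, the contraction $\mathcal{M}/X$ has as independent sets those $A$ with $A\cap X=\emptyset$ and $A\cup X$ independent in $\mathcal{M}$. $\mathrm{Greedy}(\mathcal{N}_1,\dots,\mathcal{N}_k,\tilde E)$ processes the elements of $\tilde E$ in the given order starting from the empty set and adds an element whenever the current set together with it is independent in every $\mathcal{N}_j$; it returns the resulting set. *)

(* Defs.v *)
From mathcomp Require Import all_boot all_order all_algebra.
Set Implicit Arguments. Unset Strict Implicit. Unset Printing Implicit Defensive.
Import Order.TTheory GRing.Theory Num.Theory.

Section Matroids.
Variable E : finType.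

Definition is_matroid (I : pred {set E}) : Prop :=
  [/\ I set0,
      (forall A B : {set E}, A \subset B -> I B -> I A) &
      (forall A B : {set E}, I A -> I B -> #|A| < #|B| ->
          exists2 x, x \in B :\: A & I (x |: A))].

Definition mrank (I : pred {set E}) (A : {set E}) : nat :=
  \max_(B : {set E} | (B \subset A) && I B) #|B|.

Definition mspan (I : pred {set E}) (T : {set E}) : {set E} :=
  [set e | mrank I (e |: T) == mrank I T].

(* contraction M/X (X independent): A indep iff A disjoint from X and A u X indep *)
Definition contract (I : pred {set E}) (X : {set E}) : pred {set E} :=
  fun A => [disjoint A & X] && I (A :|: X).

Definition greedy (k : nat) (N : 'I_k -> pred {set E}) (s : seq E) : {set E} :=
  foldl (fun G e => if [forall j, N j (e |: G)] then e |: G else G) set0 s.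

Definition contract_family (k : nat) (M : 'I_k -> pred {set E}) (i : 'I_k)
  (S T : {set E}) : 'I_k -> pred {set E} :=
  fun j => if j == i then contract (M j) S else contract (M j) T.

End Matroids.

(* Main.v *)
Require Import Defs.
From mathcomp Require Import all_boot all_order all_algebra.
Import Order.TTheory GRing.Theory Num.Theory.
From Stdlib Require Import Lia.
From mathcomp Require Import zify ring lra.
Set Implicit Arguments. Unset Strict Implicit. Unset Printing Implicit Defensive.

Lemma disjP (E : finType) (A B : {set E}) :
  reflect (forall x, x \in A -> x \notin B) [disjoint A & B].
Proof.
rewrite -setI_eq0; apply: (iffP eqP) => [h x xA|h].
  apply/negP => xB; have : x \in A :&: B by rewrite inE xA xB.
  by rewrite h inE.
apply/setP => x; rewrite !inE; case xA: (x \in A) => //=.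
by rewrite (negbTE (h x xA)).
Qed.

Lemma mat_sub (E : finType) (I : pred {set E}) : is_matroid I ->
  forall A B : {set E}, A \subset B -> I B -> I A.
Proof. by case. Qed.

Lemma mat_aug (E : finType) (I : pred {set E}) : is_matroid I ->
  forall A B : {set E}, I A -> I B -> #|A| < #|B| -> exists2 x, x \in B :\: A & I (x |: A).
Proof. by case. Qed.

Lemma contract_sub (E : finType) (I : pred {set E}) X : is_matroid I ->
  forall A B : {set E}, A \subset B -> contract I X B -> contract I X A.
Proof.
move=> HI A B AB /andP[dB iB]; apply/andP; split.
  apply/disjP => x xA; move/disjP: dB; apply; exact: (subsetP AB).
by apply: (mat_sub HI _ iB); apply: setSU.
Qed.

Lemma contract_mat (E : finType) (I : pred {set E}) X : is_matroid I -> I X ->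
  is_matroid (contract I X).
Proof.
move=> HI IX; split.
- apply/andP; split; last by rewrite set0U.
  by apply/disjP => x; rewrite inE.
- exact: contract_sub.
- move=> A B /andP[dA iA] /andP[dB iB] lt.
  have lt' : #|A :|: X| < #|B :|: X|.
    rewrite !cardsU (disjoint_setI0 dA) (disjoint_setI0 dB) !cards0 !subn0.
    by rewrite ltn_add2r.
  have [x /setDP[xBX xnAX] ix] := mat_aug HI iA iB lt'.
  have xnX : x \notin X by move: xnAX; rewrite inE negb_or => /andP[].
  have xB : x \in B by move: xBX; rewrite inE (negbTE xnX) orbF.
  have xnA : x \notin A by move: xnAX; rewrite inE negb_or => /andP[].
  exists x; first by rewrite inE xnA.
  apply/andP; split; last by rewrite -setUA.
  apply/disjP => z; rewrite !inE; case/orP => [/eqP->//|zA]; exact: (elimT (disjP _ _) dA).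
Qed.

Lemma mat_ext (E : finType) (I : pred {set E}) : is_matroid I ->
  forall n (A Y : {set E}), I A -> I Y -> #|Y| - #|A| <= n ->
  exists A' : {set E}, [/\ A \subset A', A' \subset A :|: Y, #|Y| <= #|A'| & I A'].
Proof.
move=> HI; elim=> [|n IH] A Y IA IY hn.
  exists A; split => //; [exact: subsetUl | by rewrite -subn_eq0 -leqn0].
case: (leqP #|Y| #|A|) => hYA.
  by exists A; split => //; exact: subsetUl.
have [x /setDP[xY xA] Ix] := mat_aug HI IA IY hYA.
have hn' : #|Y| - #|x |: A| <= n.
  by rewrite cardsU1 xA add1n subnS; move: hn; case: (#|Y| - #|A|).
have [A' [h1 h2 h3 h4]] := IH (x |: A) Y Ix IY hn'.
exists A'; split => //.
- by apply: subset_trans h1; exact: subsetU1.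
- apply: (subset_trans h2); apply/subsetP => z; rewrite !inE.
  by case/orP=> [/orP[/eqP->|->]|->]; rewrite ?xY ?orbT.
Qed.

Definition gstep (E : finType) (k : nat) (F : 'I_k -> pred {set E}) (G : {set E}) (e : E) :=
  if [forall j, F j (e |: G)] then e |: G else G.

Lemma greedyE (E : finType) (k : nat) (F : 'I_k -> pred {set E}) (s : seq E) :
  greedy F s = foldl (gstep F) set0 s.
Proof. by []. Qed.

Lemma foldl_sup (E : finType) (k : nat) (F : 'I_k -> pred {set E}) (s : seq E) (G0 : {set E}) :
  G0 \subset foldl (gstep F) G0 s.
Proof.
elim: s G0 => [|e s IH] G0 /=; first exact: subxx.
apply: subset_trans (IH _); rewrite /gstep; case: ifP => _; last exact: subxx.
exact: subsetU1.
Qed.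

Lemma foldl_sub (E : finType) (k : nat) (F : 'I_k -> pred {set E}) (s : seq E) (G0 : {set E}) :
  foldl (gstep F) G0 s \subset G0 :|: [set x in s].
Proof.
elim: s G0 => [|e s IH] G0 /=; first exact: subsetUl.
apply: subset_trans (IH _) _; apply/subsetP => z; rewrite /gstep.
case: ifP => _; rewrite !inE; last first.
  by case/orP => [->|->]; rewrite ?orbT.
by case/orP => [/orP[->|->]|->]; rewrite ?orbT.
Qed.

Lemma greedy_rcons (E : finType) (k : nat) (F : 'I_k -> pred {set E}) (s : seq E) (e : E) :
  greedy F (rcons s e) = gstep F (greedy F s) e.
Proof. by rewrite !greedyE foldl_rcons. Qed.

Lemma greedy_cat_sub (E : finType) (k : nat) (F : 'I_k -> pred {set E}) (s1 s2 : seq E) :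
  greedy F s1 \subset greedy F (s1 ++ s2).
Proof. by rewrite !greedyE foldl_cat; exact: foldl_sup. Qed.

Lemma greedy_inv (E : finType) (k : nat) (F : 'I_k -> pred {set E}) (s : seq E) :
  (forall j, F j set0) -> forall j, F j (greedy F s).
Proof.
move=> h0; rewrite greedyE; have : forall j, F j set0 by [].
elim: s (set0 : {set E}) => [|e s IH] G0 hG //=.
apply: IH => j; rewrite /gstep; case: ifP => [/forallP|_]; by [].
Qed.

Definition pre (E : finType) (k : nat) (F : 'I_k -> pred {set E}) (s : seq E) (e : E) :=
  greedy F (take (index e s) s).

Lemma pre_sub (E : finType) (k : nat) (F : 'I_k -> pred {set E}) (s : seq E) (e : E) :
  pre F s e \subset greedy F s.
Proof.
by rewrite /pre -{3}(cat_take_drop (index e s) s); exact: greedy_cat_sub.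
Qed.

Lemma greedy_mem (E : finType) (k : nat) (F : 'I_k -> pred {set E}) (s : seq E) (e : E) :
  uniq s -> e \in s -> (e \in greedy F s) = [forall j, F j (e |: pre F s e)].
Proof.
move=> us es.
have hi : index e s < size s by rewrite index_mem.
have hs := cat_take_drop (index e s) s.
rewrite (drop_nth e hi) nth_index // in hs.
have ud : e \notin drop (index e s).+1 s.
  by move: us; rewrite -{1}hs cat_uniq /= => /and4P[_ _ ->].
have up : e \notin pre F s e.
  apply/negP => /(subsetP (foldl_sub _ _ _)); rewrite !inE.
  by rewrite in_take // ltnn.
rewrite greedyE -{1}hs foldl_cat /= -/(greedy F _) -/(pre F s e).
set G1 := gstep F (pre F s e) e.
have -> : (e \in foldl (gstep F) G1 (drop (index e s).+1 s)) = (e \in G1).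
  apply/idP/idP => [/(subsetP (foldl_sub _ _ _))|/(subsetP (foldl_sup _ _ _))//].
  by rewrite in_setU inE (negbTE ud) orbF.
rewrite /G1 /gstep; case: ifP => _; first by rewrite setU11.
by rewrite (negbTE up).
Qed.

Lemma greedy_eq (E : finType) (k : nat) (F F' : 'I_k -> pred {set E}) (s : seq E) :
  (forall j (X : {set E}), F j X -> F' j X) ->
  (forall j (X : {set E}), X \subset greedy F' s -> F' j X -> F j X) ->
  forall r1 r2, r1 ++ r2 = s -> greedy F r1 = greedy F' r1.
Proof.
move=> h1 h2; elim/last_ind => [|r e IH] r2 hr; first by [].
have hr' : r ++ e :: r2 = s by rewrite -hr -cats1 -catA.
rewrite !greedy_rcons (IH (e :: r2) hr') /gstep.
set G' := greedy F' r.
have -> : [forall j, F j (e |: G')] = [forall j, F' j (e |: G')].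
  apply/forallP/forallP => h j; first exact: h1.
  apply: h2 (h j).
  have -> : e |: G' = greedy F' (rcons r e).
    by rewrite greedy_rcons /gstep; move/forallP: h => ->.
  by rewrite -hr; exact: greedy_cat_sub.
by [].
Qed.

Lemma greedy_eq_all (E : finType) (k : nat) (F F' : 'I_k -> pred {set E}) (s : seq E) :
  (forall j (X : {set E}), F j X -> F' j X) ->
  (forall j (X : {set E}), X \subset greedy F' s -> F' j X -> F j X) ->
  greedy F s = greedy F' s /\ forall e, pre F s e = pre F' s e.
Proof.
move=> h1 h2; split; first by apply: (greedy_eq h1 h2 (r2 := [::])); rewrite cats0.
by move=> e; apply: (greedy_eq h1 h2); exact: cat_take_drop.
Qed.

Lemma cardsU_disj (E : finType) (A B : {set E}) :
  [disjoint A & B] -> #|A :|: B| = #|A| + #|B|.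
Proof. by move=> d; rewrite cardsU (disjoint_setI0 d) cards0 subn0. Qed.

Lemma fam_i (E : finType) (k : nat) (M : 'I_k -> pred {set E}) i S T :
  contract_family M i S T i = contract (M i) S.
Proof. by rewrite /contract_family eqxx. Qed.

Lemma fam_j (E : finType) (k : nat) (M : 'I_k -> pred {set E}) i S T j :
  j != i -> contract_family M i S T j = contract (M j) T.
Proof. by rewrite /contract_family => /negbTE ->. Qed.

Lemma fam0 (E : finType) (k : nat) (M : 'I_k -> pred {set E}) i (S T : {set E}) :
  (forall j, is_matroid (M j)) -> (forall j, M j T) -> S \subset T ->
  forall j, contract_family M i S T j set0.
Proof.
move=> HM HT ST j; rewrite /contract_family /contract.
have d0 : forall X : {set E}, [disjoint set0 & X] by move=> X; apply/disjP => x; rewrite inE.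
case: ifP => [/eqP->|_]; rewrite d0 set0U //=.
exact: (mat_sub (HM i) ST).
Qed.

Lemma famG (E : finType) (k : nat) (M : 'I_k -> pred {set E}) i (S T : {set E}) s :
  (forall j, is_matroid (M j)) -> (forall j, M j T) -> S \subset T ->
  forall j, contract_family M i S T j (greedy (contract_family M i S T) s).
Proof. by move=> HM HT ST; apply: greedy_inv; exact: fam0. Qed.

Lemma runs_eq (E : finType) (k : nat) (M : 'I_k -> pred {set E}) i (S T : {set E}) s t :
  (forall j, is_matroid (M j)) -> t \in S ->
  contract (M i) S (greedy (contract_family M i (S :\ t) T) s) ->
  greedy (contract_family M i S T) s = greedy (contract_family M i (S :\ t) T) s /\
  forall e, pre (contract_family M i S T) s e = pre (contract_family M i (S :\ t) T) s e.
Proof.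
move=> HM tS hc; apply: greedy_eq_all => j X.
  case: (eqVneq j i) => [->|ji]; last by rewrite !fam_j.
  rewrite !fam_i => /andP[dX iX]; apply/andP; split.
    by apply/disjP => x xX; rewrite inE negb_and (disjP _ _ dX x xX) orbT.
  by apply: (mat_sub (HM i)) iX; apply: setUS; exact: subD1set.
move=> XG; case: (eqVneq j i) => [->|ji]; last by rewrite !fam_j.
by rewrite !fam_i => _; exact: (contract_sub (HM i) XG hc).
Qed.

Lemma Ucard (E : finType) (k : nat) (M : 'I_k -> pred {set E}) i (S T : {set E}) s :
  (forall j, is_matroid (M j)) -> (forall j, M j T) -> S \subset T ->
  #|[set t in T :\: S | ~~ contract (M i) (t |: S) (greedy (contract_family M i S T) s)]|
  <= #|greedy (contract_family M i S T) s|.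
Proof.
move=> HM HT ST.
set G' := greedy _ s; set U := [set t in _ | _].
have := famG i s HM HT ST i; rewrite fam_i => /andP[dGS iGS].
rewrite leqNgt; apply/negP => lt.
have UT : U \subset T :\: S by apply/subsetP => x; rewrite inE => /andP[].
have dUS : [disjoint U & S].
  by apply/disjP => x /(subsetP UT); rewrite inE => /andP[].
have iA : M i (U :|: S).
  apply: (mat_sub (HM i)) (HT i); rewrite subUset ST andbT.
  by apply: subset_trans UT (subsetDl _ _).
have lt' : #|G' :|: S| < #|U :|: S|.
  by rewrite !cardsU_disj // ltn_add2r.
have [x /setDP[xA xGS] ix] := mat_aug (HM i) iGS iA lt'.
move: xGS; rewrite inE negb_or => /andP[xG xS].
have xU : x \in U by move: xA; rewrite inE (negbTE xS) orbF.
move: (xU); rewrite inE => /andP[_]; apply/negP/negPn; apply/andP; split.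
  apply/disjP => z zG; rewrite !inE negb_or (disjP _ _ dGS z zG) andbT.
  by apply/negP => /eqP zx; move: xG; rewrite -zx zG.
by rewrite setUCA.
Qed.


Lemma Bcard (E : finType) (k : nat) (M : 'I_k -> pred {set E}) i (S T It : {set E}) s :
  (forall j, is_matroid (M j)) -> (forall j, M j T) -> S \subset T ->
  uniq s -> It \subset [set x in s] -> M i It ->
  #|[set e in It | [forall j, (j != i) ==>
        contract_family M i S T j (e |: pre (contract_family M i S T) s e)]
      && ~~ contract_family M i S T i (e |: pre (contract_family M i S T) s e)]|
  <= #|greedy (contract_family M i S T) s| +
     #|[set t in S | ~~ contract (M i) S (greedy (contract_family M i (S :\ t) T) s)]|.
Proof.
move=> HM HT ST us hIs hI.
set F := contract_family M i S T; set G := greedy F s.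
set B := [set e in It | _]; set X := [set t in S | _].
have := famG i s HM HT ST i; rewrite fam_i -/F -/G => /andP[dGS iGS].
set Y := G :|: S.
have XS : X \subset S by apply/subsetP => x; rewrite inE => /andP[].
set W := G :|: X.
have WY : W \subset Y by apply: setUS.
have iW : M i W by apply: (mat_sub (HM i) WY).
have cardW : #|W| = #|G| + #|X|.
  rewrite cardsU_disj //; apply/disjP => x xG; apply/negP => /(subsetP XS).
  exact/negP/(disjP _ _ dGS x xG).
have preG : forall e, pre F s e \subset G by move=> e; exact: pre_sub.
have dpre : forall e, [disjoint pre F s e & S].
  move=> e; apply/disjP => x /(subsetP (preG e)); exact: (disjP _ _ dGS).
have bnG : forall b, b \in B -> b \notin G.
  move=> b; rewrite inE => /andP[bI /andP[_ nFi]].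
  have bs : b \in s by move: (subsetP hIs b bI); rewrite inE.
  rewrite /G greedy_mem //; apply/negP => /forallP /(_ i); exact/negP.
have b2 : forall b t, b \in B -> t \in S -> t \notin X ->
    ~~ contract (M i) (S :\ t) (b |: pre F s b).
  move=> b t bB tS tX.
  have hc : contract (M i) S (greedy (contract_family M i (S :\ t) T) s).
    by move: tX; rewrite inE tS /= negbK.
  have [eG epre] := runs_eq HM tS hc.
  apply/negP => hcon; move: (bnG b bB); rewrite /G /F eG.
  have bI : b \in It by move: bB; rewrite inE => /andP[].
  have bs : b \in s by move: (subsetP hIs b bI); rewrite inE.
  rewrite greedy_mem // -epre; apply/negP/negPn/forallP => j.
  case: (eqVneq j i) => [->|ji]; first by rewrite fam_i.
  rewrite fam_j //; move: bB; rewrite inE => /andP[_ /andP[/forallP/(_ j)]].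
  by rewrite ji /= /F fam_j.
rewrite leqNgt; apply/negP => lt.
have iB : M i B.
  by apply: (mat_sub (HM i)) hI; apply/subsetP => x; rewrite inE => /andP[].
rewrite -cardW in lt.
have [b /setDP[bB bW] ib] := mat_aug (HM i) iW iB lt.
have bG := bnG b bB.
have bS : b \notin S.
  apply/negP => bS.
  have bX : b \notin X by apply/negP => bX; move: bW; rewrite inE bX orbT.
  move: (b2 b b bB bS bX); apply/negP/negPn/andP; split.
    apply/disjP => x; rewrite !inE => /orP[/eqP->|xp]; first by rewrite eqxx.
    by rewrite negb_and (disjP _ _ (dpre b) x xp) orbT.
  apply: (mat_sub (HM i)) iGS; apply/subsetP => x; rewrite !inE.
  case/orP => [/orP[/eqP->|/(subsetP (preG b))->]|/andP[_ ->]]; by rewrite ?bS ?orbT.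
have bY : b \notin Y by rewrite inE negb_or bG.
have nFi : ~~ F i (b |: pre F s b).
  by move: bB; rewrite inE => /andP[_ /andP[_ ->]].
have [|A' [h1 h2 h3 h4]] := mat_ext (HM i) (n := #|Y|) ib iGS; first exact: leq_subr.
have h2' : A' \subset b |: Y.
  apply/subsetP => x /(subsetP h2); rewrite in_setU1 in_setU in_setU1.
  move=> /orP[/orP[->//|xW]|xY].
    by rewrite (subsetP WY x xW) orbT.
  by rewrite xY orbT.
have bA : b \in A' by apply: (subsetP h1); rewrite setU11.
case: (boolP (Y \subset A')) => [YA|/subsetPn[z zY zA]].
  move: nFi; rewrite /F fam_i; apply/negP/negPn/andP; split.
    apply/disjP => x; rewrite !inE => /orP[/eqP->//|xp].
    exact: (disjP _ _ (dpre b) x xp).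
  apply: (mat_sub (HM i)) h4; apply/subsetP => x; rewrite !inE.
  case/orP => [/orP[/eqP->//|/(subsetP (preG b)) xG]|xS].
    by apply: (subsetP YA); rewrite inE xG.
  by apply: (subsetP YA); rewrite inE xS orbT.
have zW : z \notin W.
  apply/negP => zW; have : z \in A' by apply: (subsetP h1); rewrite in_setU1 zW orbT.
  by rewrite (negbTE zA).
have zG : z \notin G by apply/negP => zG; move: zW; rewrite in_setU zG.
have zS : z \in S by move: zY; rewrite in_setU (negbTE zG).
have zX : z \notin X by apply/negP => zX; move: zW; rewrite in_setU zX orbT.
have SA : S :\ z \subset A'.
  apply/subsetP => y; rewrite in_setD1 => /andP[yz yS]; apply/negPn/negP => yA.
  have sub : A' \subset ((b |: Y) :\ z) :\ y.
    apply/subsetP => x xA; rewrite !in_setD1 (subsetP h2' x xA) !andbT.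
    apply/andP; split; apply/negP => /eqP ex.
      by move: yA; rewrite -ex xA.
    by move: zA; rewrite -ex xA.
  have := subset_leq_card sub.
  have yY : y \in Y by rewrite inE yS orbT.
  have c1 := cardsU1 b Y; have c2 := cardsD1 z (b |: Y).
  have c3 := cardsD1 y ((b |: Y) :\ z).
  rewrite (negbTE bY) in c1; rewrite in_setU1 zY orbT in c2; rewrite in_setD1 yz in_setU1 yY orbT in c3.
  move=> hle; have := leq_trans h3 hle.
  rewrite c2 c3 in c1.
  have e : #|Y| = (#|(b |: Y) :\ z :\ y|).+1.
    by apply/eqP; rewrite -eqSS; apply/eqP; exact: (esym c1).
  by rewrite -/Y e ltnn.
move: (b2 b z bB zS zX); apply/negP/negPn/andP; split.
  apply/disjP => x; rewrite !inE => /orP[/eqP->|xp].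
    by rewrite negb_and (negbTE bS) orbT.
  by rewrite negb_and (disjP _ _ (dpre b) x xp) orbT.
apply: (mat_sub (HM i)) h4; apply/subsetP => x; rewrite !inE.
case/orP => [/orP[/eqP->//|/(subsetP (preG b)) xG]|xS].
  by apply: (subsetP h1); rewrite !inE xG orbT.
by move: xS => /andP[xz xS]; apply: (subsetP SA); rewrite in_setD1 xz xS.
Qed.

Lemma card_bigcup_le (E : finType) (I : Type) (r : seq I) (P : pred I) (A : I -> {set E}) :
  #|\bigcup_(j <- r | P j) A j| <= \sum_(j <- r | P j) #|A j|.
Proof.
apply: (big_ind2 (fun (x : {set E}) y => #|x| <= y)) => //; first by rewrite cards0.
move=> x1 x2 y1 y2 h1 h2; apply: leq_trans (leq_card_setU _ _) _.
exact: leq_add.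
Qed.

Lemma Icard (E : finType) (k : nat) (M : 'I_k -> pred {set E}) i (S T It : {set E}) s :
  (forall j, is_matroid (M j)) -> (forall j, M j T) -> S \subset T ->
  uniq s -> It \subset [set x in s] -> (2 <= k)%N ->
  (forall j, j != i -> contract (M j) T It) ->
  #|It| <= (k - 1) * #|greedy (contract_family M i S T) s| +
  #|[set e in It | [forall j, (j != i) ==>
        contract_family M i S T j (e |: pre (contract_family M i S T) s e)]
      && ~~ contract_family M i S T i (e |: pre (contract_family M i S T) s e)]|.
Proof.
move=> HM HT ST us hIs hk hIj.
set F := contract_family M i S T; set G := greedy F s.
set B := [set e in It | _].
set Q := fun j => [set e in It :\: G | ~~ F j (e |: pre F s e)].
have hQ : forall j, j != i -> #|Q j| + #|G :&: It| <= #|G|.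
  move=> j ji.
  have HN := contract_mat (HM j) (HT j).
  have FN : F j = contract (M j) T by rewrite /F fam_j.
  have NG : contract (M j) T G by rewrite -FN /G; exact: famG.
  have QI : Q j \subset It :\: G by apply/subsetP => x; rewrite inE => /andP[].
  have dQ : [disjoint Q j & G :&: It].
    apply/disjP => x /(subsetP QI); rewrite !inE => /andP[xG _].
    by rewrite (negbTE xG).
  rewrite -cardsU_disj // leqNgt; apply/negP => lt.
  have NA : contract (M j) T (Q j :|: (G :&: It)).
    apply: (contract_sub (HM j)) (hIj j ji); rewrite subUset subsetIr andbT.
    by apply: subset_trans QI (subsetDl _ _).
  have [x /setDP[xA xG] Nx] := mat_aug HN NG NA lt.
  have xQ : x \in Q j by move: xA; rewrite in_setU in_setI (negbTE xG) orbF.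
  move: xQ; rewrite inE => /andP[_]; apply/negP/negPn; rewrite FN.
  apply: (contract_sub (HM j)) Nx; apply: setUS; exact: pre_sub.
have cov : It :\: G \subset B :|: \bigcup_(j | j != i) Q j.
  apply/subsetP => e; rewrite in_setD => /andP[eG eI].
  have es : e \in s by move: (subsetP hIs e eI); rewrite inE.
  move: (eG); rewrite /G greedy_mem // => /forallPn [j nj].
  case: (boolP [forall j, (j != i) ==> F j (e |: pre F s e)]) => [al|/forallPn [j' nj']].
    rewrite in_setU; apply/orP; left; rewrite inE eI al /=.
    case: (eqVneq j i) nj => [->//|ji nj].
    by move/forallP: al => /(_ j); rewrite ji /= (negbTE nj).
  rewrite negb_imply in nj'; case/andP: nj' => j'i nj'.
  rewrite in_setU; apply/orP; right; apply/bigcupP; exists j' => //.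
  by apply/setIdP; split; [rewrite in_setD eG eI | exact: nj'].
have c1 : #|It| = #|G :&: It| + #|It :\: G|.
  by rewrite setIC cardsID.
have c2 : #|It :\: G| <= #|B| + \sum_(j | j != i) #|Q j|.
  apply: leq_trans (subset_leq_card cov) _.
  apply: leq_trans (leq_card_setU _ _) _; rewrite leq_add2l.
  exact: card_bigcup_le.
have c3 : \sum_(j | j != i) #|Q j| <= \sum_(j | j != i) (#|G| - #|G :&: It|).
  apply: leq_sum => j ji; rewrite leq_subRL; first by rewrite addnC; exact: hQ.
  by apply: subset_leq_card; exact: subsetIl.
have c4 : \sum_(j | j != i) (#|G| - #|G :&: It|) = (k - 1) * (#|G| - #|G :&: It|).
  have := sum_nat_const (predC1 i) (#|G| - #|G :&: It|).
  by rewrite cardC1 card_ord subn1.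
have c5 : #|G :&: It| <= #|G| by apply: subset_leq_card; exact: subsetIl.
rewrite c4 in c3.
move: c1 c2 c3 c5; move: #|It| #|It :\: G| #|B| (\sum_(j | j != i) #|Q j|) #|G :&: It| #|G| => n1 n2 n3 n4 n5 n6.
nia.
Qed.

Section RingPart.
Local Open Scope ring_scope.

Lemma pow_D1 (E : finType) (T S : {set E}) t :
  (S \in powerset T) && (t \notin S) = (S \in powerset (T :\ t)).
Proof.
rewrite !powersetE; apply/idP/idP.
  case/andP => ST tS; apply/subsetP => x xS; rewrite in_setD1 (subsetP ST x xS) andbT.
  by apply/negP => /eqP ext; move: tS; rewrite -ext xS.
move=> h; apply/andP; split; first exact: (subset_trans h (subD1set _ _)).
by apply/negP => /(subsetP h); rewrite in_setD1 eqxx.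
Qed.

Lemma sum_add1 (R : nmodType) (E : finType) (T : {set E}) t (F : {set E} -> R) :
  t \in T ->
  \sum_(S in powerset T | t \in S) F S = \sum_(S in powerset (T :\ t)) F (t |: S).
Proof.
move=> tT.
rewrite (reindex_onto (fun S => t |: S) (fun S => S :\ t)); last first.
  by move=> S /andP[_ tS]; rewrite setD1K.
apply: eq_bigl => S; rewrite setU11 andbT -pow_D1.
case: (boolP (t \in S)) => tS /=.
  rewrite andbF; apply/negbTE/negP => /andP[_ /eqP h].
  by move: tS; rewrite -h setD11.
rewrite setU1K // eqxx andbT !powersetE subUset sub1set tT.
by rewrite andbT.
Qed.

Lemma sum_binom (R : comPzSemiRingType) (E : finType) (a b : R) (n : nat) :
  forall T : {set E}, #|T| = n ->
  \sum_(S in powerset T) a ^+ #|S| * b ^+ (#|T| - #|S|) = (a + b) ^+ #|T|.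
Proof.
elim: n => [|n IH] T hT.
  have -> : T = set0 by apply/eqP; rewrite -cards_eq0 hT.
  rewrite powerset0 big_set1 cards0 subnn !expr0 mulr1.
  by [].
have : (0 < #|T|)%N by rewrite hT.
case/card_gt0P => t tT.
have hT' : #|T :\ t| = n by move: hT; rewrite (cardsD1 t) tT add1n => -[].
rewrite (bigID (fun S : {set E} => t \in S)) /= sum_add1 //.
rewrite [X in _ + X](eq_bigl (fun S : {set E} => S \in powerset (T :\ t))); last by move=> S; exact: pow_D1.
rewrite hT exprS -hT' -(IH _ hT') mulrDl !big_distrr /=.
congr (_ + _); apply: eq_bigr => S; rewrite powersetE => ST.
  have tS : t \notin S by apply/negP => /(subsetP ST); rewrite in_setD1 eqxx.
  by rewrite cardsU1 tS add1n exprS -mulrA subSS.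
have le : (#|S| <= #|T :\ t|)%N by exact: subset_leq_card.
by rewrite subSn // exprS mulrCA.
Qed.

Lemma dsum (R : nmodType) (E : finType) (T : {set E}) (f : {set E} -> E -> R) :
  \sum_(S in powerset T) \sum_(t in S) f S t =
  \sum_(S in powerset T) \sum_(t in T :\: S) f (t |: S) t.
Proof.
rewrite (exchange_big_dep (fun t => t \in T)) /=; last first.
  by move=> S t; rewrite powersetE => ST /(subsetP ST).
rewrite [RHS](exchange_big_dep (fun t => t \in T)) /=; last first.
  by move=> S t _; rewrite in_setD => /andP[].
apply: eq_bigr => t tT; rewrite sum_add1 //.
by apply: eq_bigl => S; rewrite in_setD tT andbT pow_D1.
Qed.

Lemma card_sum (R : pzSemiRingType) (E : finType) (A : {set E}) (P : pred E) :
  (#|[set x in A | P x]|)%:R = \sum_(x in A) (P x)%:R :> R.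
Proof.
rewrite -sum1_card natr_sum big_mkcond [RHS]big_mkcond /=.
apply: eq_bigr => x _; rewrite inE; case: (x \in A); case: (P x) => //.
Qed.

Lemma ident (R : comPzRingType) (E : finType) (T : {set E}) (p : R) (c : {set E} -> E -> bool) :
  p * \sum_(S in powerset T) ((1 - p) ^+ #|S| * p ^+ (#|T| - #|S|)) * (#|[set t in S | c S t]|)%:R
  = (1 - p) * \sum_(S in powerset T) ((1 - p) ^+ #|S| * p ^+ (#|T| - #|S|)) *
       (#|[set t in T :\: S | c (t |: S) t]|)%:R.
Proof.
rewrite !big_distrr /=.
transitivity (\sum_(S in powerset T) \sum_(t in S)
   p * ((1 - p) ^+ #|S| * p ^+ (#|T| - #|S|)) * (c S t)%:R).
  apply: eq_bigr => S _; rewrite card_sum !big_distrr /=.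
  by apply: eq_bigr => t _; rewrite mulrA.
rewrite dsum; apply: eq_bigr => S; rewrite powersetE => ST.
rewrite card_sum big_distrr [RHS]big_distrr /=; apply: eq_bigr => t.
rewrite in_setD => /andP[tS tT]; rewrite mulrA; congr (_ * _).
have lt : (#|S| < #|T|)%N.
  apply: proper_card; rewrite properEneq ST andbT.
  by apply/negP => /eqP eST; move: tS; rewrite eST tT.
rewrite cardsU1 tS add1n exprS subnS.
have -> : (#|T| - #|S| = (#|T| - #|S|).-1.+1)%N by rewrite prednK // subn_gt0.
by rewrite exprS; ring.
Qed.

Lemma final_alg (R : realFieldType) (E : finType) (T : {set E}) (p : R) (k n : nat)
  (g b x u : {set E} -> nat) :
  0 < p -> p < 1 -> (2 <= k)%N ->
  (forall S, S \in powerset T -> (n <= (k - 1) * g S + b S)%N) ->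
  (forall S, S \in powerset T -> (b S <= g S + x S)%N) ->
  (forall S, S \in powerset T -> (u S <= g S)%N) ->
  p * \sum_(S in powerset T) (1 - p) ^+ #|S| * p ^+ (#|T| - #|S|) * (x S)%:R
   = (1 - p) * \sum_(S in powerset T) (1 - p) ^+ #|S| * p ^+ (#|T| - #|S|) * (u S)%:R ->
  p / (1 + p * (k - 1)%:R) * n%:R <=
    \sum_(S in powerset T) (1 - p) ^+ #|S| * p ^+ (#|T| - #|S|) * (g S)%:R.
Proof.
move=> p0 p1 hk hn hb hu hid.
set W := fun S : {set E} => (1 - p) ^+ #|S| * p ^+ (#|T| - #|S|).
have w0 : forall S, 0 <= W S.
  by move=> S; rewrite /W mulr_ge0 // exprn_ge0 // ?subr_ge0 ?ltW.
have sw : \sum_(S in powerset T) W S = 1.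
  by rewrite /W (sum_binom _ _ (erefl #|T|)) subrK expr1n.
set EG := \sum_(S in powerset T) W S * (g S)%:R.
set EB := \sum_(S in powerset T) W S * (b S)%:R.
set EX := \sum_(S in powerset T) W S * (x S)%:R.
set EU := \sum_(S in powerset T) W S * (u S)%:R.
have h1 : n%:R <= (k - 1)%:R * EG + EB.
  have -> : n%:R = \sum_(S in powerset T) W S * n%:R :> R.
    by rewrite -big_distrl /= sw mul1r.
  rewrite /EG /EB big_distrr -big_split /=; apply: ler_sum => S hS.
  rewrite mulrCA -mulrDr; apply: ler_wpM2l => //.
  by rewrite -natrM -natrD ler_nat; exact: hn.
have h2 : EB <= EG + EX.
  rewrite /EG /EX /EB -big_split /=; apply: ler_sum => S hS.
  rewrite -mulrDr; apply: ler_wpM2l => //.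
  by rewrite -natrD ler_nat; exact: hb.
have h3 : EU <= EG.
  apply: ler_sum => S hS; apply: ler_wpM2l => //.
  by rewrite ler_nat; exact: hu.
have D0 : 0 < 1 + p * (k - 1)%:R.
  by apply: ltr_wpDr; [apply: mulr_ge0; [exact: ltW|exact: ler0n] | exact: ltr01].
rewrite mulrAC ler_pdivrMr //.
have a : p * n%:R <= p * ((k - 1)%:R * EG + EB) by apply: ler_wpM2l => //; exact: ltW.
have c : p * EB <= p * (EG + EX) by apply: ler_wpM2l => //; exact: ltW.
have d : (1 - p) * EU <= (1 - p) * EG by apply: ler_wpM2l => //; rewrite subr_ge0 ltW.
rewrite -/EX -/EU in hid.
move: a c d hid; set K := (k - 1)%:R; move=> a c d hid.
rewrite !mulrDr in a c d *.
nra.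
Qed.

End RingPart.

Unset Implicit Arguments.
Local Open Scope ring_scope.

Theorem lemma15 (R : realFieldType) (E : finType) (k : nat)
  (M : 'I_k -> pred {set E}) (T : {set E}) (p : R) (i : 'I_k)
  (Et It : {set E}) (s : seq E) :
  (2 <= k)%N ->
  (forall j, is_matroid (M j)) ->
  (forall j, M j T) ->
  0 < p < 1 ->
  Et \subset mspan (M i) T ->
  It \subset Et ->
  M i It ->
  (forall j, j != i -> contract (M j) T It) ->
  uniq s -> [set x in s] = Et ->
  \sum_(S in powerset T)
      (1 - p) ^+ #|S| * p ^+ (#|T| - #|S|) *
      (#|greedy (contract_family M i S T) s|)%:R
    >= p / (1 + p * (k - 1)%:R) * (#|It|)%:R.
Proof.
move=> hk HM HT /andP[p0 p1] _ hIE hIi hIj us hs.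
have hIs : It \subset [set x in s] by rewrite hs.
pose c := fun (S : {set E}) (t : E) =>
  ~~ contract (M i) S (greedy (contract_family M i (S :\ t) T) s).
apply: (final_alg
  (b := fun S => #|[set e in It | [forall j, (j != i) ==>
        contract_family M i S T j (e |: pre (contract_family M i S T) s e)]
      && ~~ contract_family M i S T i (e |: pre (contract_family M i S T) s e)]|)
  (x := fun S => #|[set t in S | c S t]|)
  (u := fun S => #|[set t in T :\: S | c (t |: S) t]|)) => //.
- by move=> S; rewrite powersetE => ST; exact: Icard.
- by move=> S; rewrite powersetE => ST; exact: Bcard.
- move=> S; rewrite powersetE => ST.
  have -> : [set t in T :\: S | c (t |: S) t] =
            [set t in T :\: S | ~~ contract (M i) (t |: S) (greedy (contract_family M i S T) s)].
    apply/setP => t; rewrite !inE; case: (boolP (t \in S)) => //= tS.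
    by rewrite /c setU1K.
  exact: Ucard.
- exact: ident.
Qed.
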